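(* Let $\Gamma_1,\Gamma_2$ be propositional theories over a signature $\mathcal L$ (possibly infinite). Then $\Gamma_1$ and $\Gamma_2$ are uniformly equivalent if and only if $C_u(\Gamma_1)=C_u(\Gamma_2)$.
   Context: A propositional signature $\mathcal L$ is a set of atoms. Formulas are built from atoms and $\bot$ using $\wedge,\vee,\to$; $\neg\phi$ abbreviates $\phi\to\bot$ and $\top$ abbreviates $\bot\to\bot$. A theory is a set of formulas. An HT-interpretation over $\mathcal L$ is a pair $(X,Y)$ with $X\subseteq Y\subseteq\mathcal L$; it is total if $X=Y$. $Y\models\phi$ denotes classical satisfaction (atoms in $Y$ true, all others false). HT-satisfaction is defined recursively: $(X,Y)\models a$ iff $a\in X$ for an atom $a$; $(X,Y)\not\models\bot$; $(X,Y)\models\phi\wedge\psi$ iff both conjuncts are satisfied; $(X,Y)\models\phi\vee\psi$ iff one disjunct is satisfied; $(X,Y)\models\phi\to\psi$ iff (i) $(X,Y)\not\models\phi$ or $(X,Y)\models\psi$, and (ii) $Y\models\phi\to\psi$. $(X,Y)\models\Gamma$ iff $(X,Y)$ satisfies every formula of $\Gamma$. An HT-countermodel of $\Gamma$ is an HT-interpretation $(X,Y)$ with $(X,Y)\not\models\Gamma$; $C_s(\Gamma)$ is the set of HT-countermodels of $\Gamma$ (over $\mathcal L$). A total $(Y,Y)$ is an equilibrium model of $\Gamma$ iff $(Y,Y)\models\Gamma$ and $(X,Y)\not\models\Gamma$ for every $X\subsetneq Y$; then $Y$ is an answer set of $\Gamma$. A formula is factual if it is built from atoms and $\bot$ using only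 $\wedge$, $\vee$ and implications of the form $\phi\to\bot$. Theories $\Gamma_1,\Gamma_2$ over $\mathcal L$ are uniformly equivalent iff for every signature $\mathcal L'\supseteq\mathcal L$ and every factual theory $\Gamma$ over $\mathcal L'$, the theories $\Gamma_1\cup\Gamma$ and $\Gamma_2\cup\Gamma$ have the same answer sets. An HT-interpretation $(X,Y)$ is there-closed in a set $S$ of HT-interpretations if $(Y,Y)\notin S$ and $(X',Y)\in S$ for every $X'$ with $X\subseteq X'\subsetneq Y$. $C_u(\Gamma)$ denotes the set of all HT-interpretations over $\mathcal L$ that are there-closed in $C_s(\Gamma)$. *)

(* Defs.v *)
From Stdlib Require Import Classical.

Inductive formula (A : Type) : Type :=
| Atom : A -> formula A
| Bot : formula A
| And : formula A -> formula A -> formula A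
| Or : formula A -> formula A -> formula A
| Imp : formula A -> formula A -> formula A.

Arguments Atom {A} _.
Arguments Bot {A}.
Arguments And {A} _ _.
Arguments Or {A} _ _.
Arguments Imp {A} _ _.

Definition theory (A : Type) := formula A -> Prop.
Definition aset (A : Type) := A -> Prop.

Definition subset {A : Type} (X Y : aset A) : Prop := forall a, X a -> Y a.
Definition psubset {A : Type} (X Y : aset A) : Prop :=
  subset X Y /\ exists a, Y a /\ ~ X a.

Fixpoint csat {A : Type} (Y : aset A) (phi : formula A) : Prop :=
  match phi with
  | Atom a => Y a
  | Bot => False
  | And p q => csat Y p /\ csat Y q
  | Or p q => csat Y p \/ csat Y q
  | Imp p q => csat Y p -> csat Y q
  end.

Fixpoint htsat {A : Type} (X Y : aset A) (phi : formula A) : Prop :=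
  match phi with
  | Atom a => X a
  | Bot => False
  | And p q => htsat X Y p /\ htsat X Y q
  | Or p q => htsat X Y p \/ htsat X Y q
  | Imp p q => (~ htsat X Y p \/ htsat X Y q) /\ csat Y (Imp p q)
  end.

Definition htsatT {A : Type} (X Y : aset A) (G : theory A) : Prop :=
  forall phi, G phi -> htsat X Y phi.

Definition HTint {A : Type} (X Y : aset A) : Prop := subset X Y.

Definition Cs {A : Type} (G : theory A) (X Y : aset A) : Prop :=
  HTint X Y /\ ~ htsatT X Y G.

Definition there_closed {A : Type} (S : aset A -> aset A -> Prop) (X Y : aset A) : Prop :=
  HTint X Y /\ ~ S Y Y /\
  (forall X', subset X X' -> psubset X' Y -> S X' Y).

Definition Cu {A : Type} (G : theory A) (X Y : aset A) : Prop :=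
  there_closed (Cs G) X Y.

Definition answer_set {A : Type} (G : theory A) (Y : aset A) : Prop :=
  htsatT Y Y G /\ (forall X, psubset X Y -> ~ htsatT X Y G).

Inductive factual {A : Type} : formula A -> Prop :=
| fact_atom : forall a, factual (Atom a)
| fact_bot : factual Bot
| fact_and : forall p q, factual p -> factual q -> factual (And p q)
| fact_or : forall p q, factual p -> factual q -> factual (Or p q)
| fact_neg : forall p, factual p -> factual (Imp p Bot).

Definition factual_theory {A : Type} (G : theory A) : Prop :=
  forall phi, G phi -> factual phi.

Fixpoint fmap {A B : Type} (f : A -> B) (phi : formula A) : formula B :=
  match phi with
  | Atom a => Atom (f a)
  | Bot => Bot
  | And p q => And (fmap f p) (fmap f q)
  | Or p q => Or (fmap f p) (fmap f q)
  | Imp p q => Imp (fmap f p) (fmap f q)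
  end.

Definition ext_union {A B : Type} (f : A -> B) (G : theory A) (H : theory B) : theory B :=
  fun psi => (exists phi, G phi /\ psi = fmap f phi) \/ H psi.

Definition injective {A B : Type} (f : A -> B) : Prop :=
  forall x y, f x = f y -> x = y.

(* Uniform equivalence: every signature L' ⊇ L is represented by a type L'
   together with an injective embedding of the atoms of L into L'. *)
Definition unif_equiv {A : Type} (G1 G2 : theory A) : Prop :=
  forall (B : Type) (f : A -> B), injective f ->
  forall H : theory B, factual_theory H ->
  forall Y : aset B, answer_set (ext_union f G1 H) Y <-> answer_set (ext_union f G2 H) Y.

(* Main.v *)
Require Import Defs.
From Stdlib Require Import Classical.

Lemma csat_map {A B} (f : A -> B) (Y : aset B) phi :
  csat Y (fmap f phi) <-> csat (fun a => Y (f a)) phi.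
Proof. induction phi; simpl; tauto. Qed.

Lemma htsat_map {A B} (f : A -> B) (X Y : aset B) phi :
  htsat X Y (fmap f phi) <-> htsat (fun a => X (f a)) (fun a => Y (f a)) phi.
Proof.
  induction phi; simpl; try tauto.
  pose proof (csat_map f Y phi1); pose proof (csat_map f Y phi2); tauto.
Qed.

Lemma csat_ext {A} (Y Y' : aset A) phi :
  (forall a, Y a <-> Y' a) -> (csat Y phi <-> csat Y' phi).
Proof. intros H; induction phi; simpl; try tauto; apply H. Qed.

Lemma htsat_ext {A} (X X' Y Y' : aset A) phi :
  (forall a, X a <-> X' a) -> (forall a, Y a <-> Y' a) ->
  (htsat X Y phi <-> htsat X' Y' phi).
Proof.
  intros HX HY; induction phi; simpl; try tauto; try apply HX.
  pose proof (csat_ext Y Y' phi1 HY); pose proof (csat_ext Y Y' phi2 HY); tauto.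
Qed.

Lemma persist {A} (X Y : aset A) phi : subset X Y -> htsat X Y phi -> csat Y phi.
Proof.
  intros S; induction phi; simpl; try tauto; apply S.
Qed.

Lemma fact_mono {A} (X X' Y : aset A) phi : factual phi ->
  subset X X' -> subset X' Y -> htsat X Y phi -> htsat X' Y phi.
Proof.
  intros F S1 S2; induction F; simpl; try tauto.
  - apply S1.
  - intros [_ H]; split; [left|]; auto.
    intro Hp; apply H; exact (persist X' Y p S2 Hp).
Qed.

Lemma Cu_total {A} (G : theory A) Y : htsatT Y Y G -> Cu G Y Y.
Proof.
  intros H; split; [intros a h; exact h|split].
  - intros [_ C]; auto.
  - intros X' S [_ [a [Ya nX]]]. exfalso; auto.
Qed.

Lemma Cu_total_inv {A} (G : theory A) Y : Cu G Y Y -> htsatT Y Y G.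
Proof.
  intros [_ [H _]]. apply NNPP; intro C; apply H; split; [intros a h; exact h|exact C].
Qed.

Lemma dir2 {A} (G1 G2 : theory A) :
  (forall X Y : aset A, Cu G1 X Y <-> Cu G2 X Y) ->
  forall (B : Type) (f : A -> B), injective f ->
  forall H : theory B, factual_theory H ->
  forall Y : aset B, answer_set (ext_union f G1 H) Y -> answer_set (ext_union f G2 H) Y.
Proof.
  intros HC B f finj H HF Y [HY HM].
  set (Y0 := fun a => Y (f a)).
  assert (T1 : htsatT Y0 Y0 G1).
  { intros phi Hp. apply (htsat_map f Y Y phi). apply HY. left; eauto. }
  assert (T2 : htsatT Y0 Y0 G2).
  { apply Cu_total_inv, HC, Cu_total, T1. }
  split.
  - intros psi [[phi [Hp ->]]|Hh].
    + apply htsat_map, T2, Hp.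
    + apply HY; right; exact Hh.
  - intros X [SXY [b [Yb nXb]]] HX.
    set (X0 := fun a => X (f a)).
    assert (HX2 : htsatT X0 Y0 G2).
    { intros phi Hp. apply (htsat_map f X Y phi). apply HX. left; eauto. }
    assert (HXH : forall psi, H psi -> htsat X Y psi) by (intros; apply HX; right; auto).
    destruct (classic (exists a, Y0 a /\ ~ X0 a)) as [Hex|Hall].
    + destruct (classic (Cu G1 X0 Y0)) as [Hc|Hc].
      * apply HC in Hc. destruct Hc as [_ [_ Hc]].
        assert (Cs G2 X0 Y0) as [_ Hn].
        { apply Hc; [intros a h; exact h| split; [intros a h; apply SXY, h|exact Hex]]. }
        auto.
      * assert (exists X', subset X0 X' /\ psubset X' Y0 /\ ~ Cs G1 X' Y0) as [X' [S1 [PS Hn]]].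
        { apply NNPP; intro N; apply Hc; split; [intros a h; apply SXY, h|split].
          - intros [_ C]; auto.
          - intros X' S1 PS; apply NNPP; intro C; apply N; eauto. }
        assert (HX' : htsatT X' Y0 G1).
        { apply NNPP; intro C; apply Hn; split; [apply PS|exact C]. }
        set (X'' := fun b => X b \/ exists a, f a = b /\ X' a).
        assert (E : forall a, X'' (f a) <-> X' a).
        { intro a; unfold X''; split.
          - intros [h|[a' [e h]]]; [apply S1, h|]. apply finj in e; subst; exact h.
          - intros h; right; eauto. }
        apply (HM X'').
        { split.
          - intros c [h|[a [<- h]]]; [apply SXY, h|apply PS, h].
          - destruct PS as [_ [a [Ya nXa]]]. exists (f a); split; [exact Ya|].
            intro h; apply nXa, E, h. }
        intros psi [[phi [Hp ->]]|Hh].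
        -- apply htsat_map. apply (htsat_ext X' _ Y0 _); [intro a; rewrite E; tauto|tauto|].
           apply HX', Hp.
        -- apply (fact_mono X X'' Y); auto.
           ++ intros c h; left; exact h.
           ++ intros c [h|[a [<- h]]]; [apply SXY, h|apply PS, h].
    + apply (HM X); [split; [exact SXY|eauto]|].
      intros psi [[phi [Hp ->]]|Hh].
      * apply htsat_map. apply (htsat_ext Y0 _ Y0 _); [|tauto|apply T1, Hp].
        intro a; split; [|intro h; apply SXY, h].
        intro h; apply NNPP; intro n; apply Hall; exists a; split; auto.
      * apply HXH, Hh.
Qed.

Definition facts {A} (X : aset A) : theory A := fun psi => exists a, X a /\ psi = Atom a.

Lemma facts_factual {A} (X : aset A) : factual_theory (facts X).
Proof. intros psi [a [_ ->]]; constructor. Qed.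

Lemma id_inj {A} : injective (fun a : A => a).
Proof. intros x y e; exact e. Qed.

Lemma total_transfer {A} (G1 G2 : theory A) (Y : aset A) :
  unif_equiv G1 G2 -> htsatT Y Y G1 -> htsatT Y Y G2.
Proof.
  intros U T.
  assert (AS : answer_set (ext_union (fun a => a) G1 (facts Y)) Y).
  { split.
    - intros psi [[phi [Hp ->]]|[a [Ya ->]]].
      + apply htsat_map, T, Hp.
      + exact Ya.
    - intros X [_ [a [Ya nXa]]] HX. apply nXa. apply (HX (Atom a)). right; exists a; split; [exact Ya|reflexivity]. }
  apply (U A (fun a => a) id_inj (facts Y) (facts_factual Y) Y) in AS.
  destruct AS as [HY _]. intros phi Hp.
  apply (htsat_map (fun a => a) Y Y phi). apply HY; left; eauto.
Qed.

Lemma dir1 {A} (G1 G2 : theory A) :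
  unif_equiv G1 G2 -> forall X Y, Cu G1 X Y -> Cu G2 X Y.
Proof.
  intros U X Y Hc.
  pose proof (Cu_total_inv G1 Y) as _.
  destruct Hc as [SXY [NT Hcl]].
  assert (T1 : htsatT Y Y G1).
  { apply NNPP; intro C; apply NT; split; [intros a h; exact h|exact C]. }
  pose proof (total_transfer G1 G2 Y U T1) as T2.
  split; [exact SXY|split].
  - intros [_ C]; auto.
  - intros X' S1 PS. split; [apply PS|]. intro HX'.
    assert (AS : answer_set (ext_union (fun a => a) G1 (facts X')) Y).
    { split.
      - intros psi [[phi [Hp ->]]|[a [Xa ->]]].
        + apply htsat_map, T1, Hp.
        + apply PS, Xa.
      - intros Z PZ HZ.
        assert (SZ : subset X' Z).
        { intros a h. apply (HZ (Atom a)). right; exists a; split; [exact h|reflexivity]. }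
        assert (Cs G1 Z Y) as [_ Hn].
        { apply Hcl; [intros a h; apply SZ, S1, h|exact PZ]. }
        apply Hn. intros phi Hp. apply (htsat_map (fun a => a) Z Y phi).
        apply HZ; left; eauto. }
    apply (U A (fun a => a) id_inj (facts X') (facts_factual X') Y) in AS.
    destruct AS as [_ HM]. apply (HM X' PS).
    intros psi [[phi [Hp ->]]|[a [Xa ->]]].
    + apply htsat_map, HX', Hp.
    + exact Xa.
Qed.

Theorem mainTheorem1 (A : Type) (G1 G2 : theory A) :
  unif_equiv G1 G2 <-> (forall X Y : aset A, Cu G1 X Y <-> Cu G2 X Y).
Proof.
  split.
  - intros U X Y; split; apply dir1; auto.
    intros B f fi H HF Z; symmetry; apply U; auto.
  - intros HC B f fi H HF Y; split; apply dir2; auto.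
    intros X Z; symmetry; apply HC.
Qed.
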